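(* Let $\Gamma\subseteq[0,1]$ be a set which satisfies the DCC. Then there exist real numbers $\epsilon,\delta\in(0,1]$ such that $$\{\textstyle\sum_i n_ib_i'-1>0\mid b_i'\in\Gamma_\epsilon\cap[0,1],\ n_i\in\mathbb{Z}_{\ge0}\}\subseteq[\delta,+\infty),$$ where $\Gamma_\epsilon:=\bigcup_{b\in\Gamma}[b-\epsilon,b]$.
   Context: A set $\Gamma\subseteq\mathbb{R}$ satisfies the descending chain condition (DCC) if every non-increasing sequence in $\Gamma$ stabilizes. Sums $\sum_i n_ib_i'$ are finite sums. *)

(* Defs.v *)
From Stdlib Require Import Reals List.
Open Scope R_scope.

Definition DCC (Gamma : R -> Prop) : Prop :=
  forall u : nat -> R,
    (forall k, Gamma (u k)) ->
    (forall k, u (S k) <= u k) ->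
    exists N, forall k, (N <= k)%nat -> u k = u N.

Definition Gamma_eps (Gamma : R -> Prop) (eps : R) (x : R) : Prop :=
  exists b, Gamma b /\ b - eps <= x <= b.

Definition wsum (l : list (nat * R)) : R :=
  fold_right (fun p acc => INR (fst p) * snd p + acc) 0 l.

(* Main.v *)
Require Import Defs.
From Stdlib Require Import Reals List.
From Stdlib Require Import Lra Lia Classical ClassicalEpsilon.
Open Scope R_scope.

Definition GAP (S : R -> Prop) : Prop :=
  forall t, exists d, 0 < d /\ forall s, S s -> ~ (t < s < t + d).

Fixpoint iseq (c : R -> R) (x0 : R) (k : nat) : R :=
  match k with O => x0 | S k => c (iseq c x0 k) end.

Lemma gap_dcc (G : R -> Prop) : DCC G -> GAP G.
Proof.
  intros H t. apply NNPP; intro Hn.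
  assert (Hc : forall x, exists s, t < x -> G s /\ t < s < x).
  { intro x. destruct (Rlt_dec t x) as [Hx|Hx].
    - apply NNPP; intro Hc; apply Hn; exists (x - t); split; [lra|].
      intros s Hs Hst; apply Hc; exists s; intros _; split; [auto|lra].
    - exists 0; intro; lra. }
  set (c := fun x => proj1_sig (constructive_indefinite_description _ (Hc x))).
  assert (Hcp : forall x, t < x -> G (c x) /\ t < c x < x).
  { intros x Hx. unfold c. destruct (constructive_indefinite_description _ (Hc x)) as [s Hs].
    simpl. auto. }
  set (u := iseq c (c (t+1))).
  assert (Hu : forall k, G (u k) /\ t < u k).
  { induction k; unfold u in *; simpl in *.
    - destruct (Hcp (t+1)) as [A B]; [lra|]. split; [auto|lra].
    - destruct IHk as [_ B]. destruct (Hcp _ B) as [A C]. split; [auto|lra]. }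
  assert (Hd : forall k, u (S k) < u k).
  { intro k. destruct (Hu k) as [_ B]. destruct (Hcp _ B) as [_ C]. unfold u in *; simpl. lra. }
  destruct (H u (fun k => proj1 (Hu k)) (fun k => Rlt_le _ _ (Hd k))) as [N HN].
  specialize (HN (S N) (le_S _ _ (le_n N))). specialize (Hd N). lra.
Qed.

Lemma gap_sum (A B : R -> Prop) : GAP A -> GAP B -> (forall a, A a -> 0 <= a <= 1) ->
  GAP (fun x => exists a b, A a /\ B b /\ x = a + b).
Proof.
  intros HA HB Hbd t. apply NNPP; intro Hn.
  assert (Hk : forall k : nat, exists ab : R * R,
    A (fst ab) /\ B (snd ab) /\ t < fst ab + snd ab < t + / INR (S k)).
  { intro k. apply NNPP; intro Hc; apply Hn; exists (/ INR (S k)); split.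
    - apply Rinv_0_lt_compat, lt_0_INR; lia.
    - intros x (a & b & Ha & Hb' & ->) Hx; apply Hc; exists (a, b); simpl; auto. }
  set (f := fun k => proj1_sig (constructive_indefinite_description _ (Hk k))).
  assert (Hf : forall k, A (fst (f k)) /\ B (snd (f k)) /\
     t < fst (f k) + snd (f k) < t + / INR (S k)).
  { intro k. unfold f. destruct (constructive_indefinite_description _ (Hk k)) as [ab Hab].
    simpl; auto. }
  destruct (Bolzano_Weierstrass (fun k => fst (f k)) (fun c => 0 <= c <= 1)
    (compact_P3 0 1)) as [al Hal].
  { intro n. apply Hbd. apply Hf. }
  destruct (HA al) as [d1 [Hd1 HA1]].
  destruct (HB (t - al)) as [d2 [Hd2 HB2]].
  destruct (archimed_cor1 (d2/2)) as [N [HN HN0]]; [lra|].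
  assert (Hpos : 0 < Rmin d1 (d2/2)) by (apply Rmin_pos; lra).
  destruct (Hal (disc al (mkposreal _ Hpos)) N) as [p [Hp Hv]].
  { exists (mkposreal _ Hpos). intros y Hy; exact Hy. }
  unfold disc in Hv; simpl in Hv.
  destruct (Hf p) as [Ha [Hb Hab]].
  set (a := fst (f p)) in *. set (b := snd (f p)) in *.
  assert (Hinv : / INR (S p) <= / INR N).
  { apply Rinv_le_contravar; [apply lt_0_INR; lia | apply le_INR; lia]. }
  assert (Hm1 := Rmin_l d1 (d2/2)). assert (Hm2 := Rmin_r d1 (d2/2)).
  apply Rabs_def2 in Hv. destruct Hv as [Hv1 Hv2].
  assert (Hale : a <= al).
  { destruct (Rle_dec a al) as [?|Hnot]; [auto|]. exfalso.
    apply (HA1 a Ha). lra. }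
  apply (HB2 b Hb). lra.
Qed.

Definition G0 (G : R -> Prop) (x : R) : Prop := G x \/ x = 0.

Fixpoint SN (G : R -> Prop) (n : nat) : R -> Prop :=
  match n with
  | O => fun x => x = 0
  | S n => fun x => exists a s, G0 G a /\ SN G n s /\ x = a + s
  end.

Lemma gap_zero : GAP (fun x => x = 0).
Proof.
  intro t. destruct (Rlt_dec t 0).
  - exists (- t). split; [lra|]. intros s -> H; lra.
  - exists 1. split; [lra|]. intros s -> H; lra.
Qed.

Lemma gap_G0 G : GAP G -> GAP (G0 G).
Proof.
  intros H t. destruct (H t) as [d [Hd H1]]. destruct (gap_zero t) as [d' [Hd' H2]].
  exists (Rmin d d'). split; [apply Rmin_pos; lra|].
  assert (Hm1 := Rmin_l d d'). assert (Hm2 := Rmin_r d d').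
  intros s [Hs|Hs] Hst.
  - apply (H1 s Hs). lra.
  - apply (H2 s Hs). lra.
Qed.

Lemma gap_SN G : GAP G -> (forall x, G x -> 0 <= x <= 1) -> forall n, GAP (SN G n).
Proof.
  intros H HG n. induction n as [|n IH]; simpl.
  - apply gap_zero.
  - apply (gap_sum (G0 G) (SN G n)); auto.
    + apply gap_G0; auto.
    + intros a [Ha| ->]; [apply HG; auto | lra].
Qed.

Lemma SN_mono G m n s : (m <= n)%nat -> SN G m s -> SN G n s.
Proof.
  intros Hmn. induction Hmn; auto.
  intro Hs. simpl. exists 0, s. split; [right; auto|]. split; [auto|ring].
Qed.

Theorem lemma3p4 (Gamma : R -> Prop)
  (HG : forall x, Gamma x -> 0 <= x <= 1)
  (Hdcc : DCC Gamma) :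
  exists eps delta : R,
    0 < eps <= 1 /\ 0 < delta <= 1 /\
    forall l : list (nat * R),
      (forall p, In p l -> Gamma_eps Gamma eps (snd p) /\ 0 <= snd p <= 1) ->
      wsum l - 1 > 0 -> wsum l - 1 >= delta.
Proof.
  assert (Hgap := gap_dcc _ Hdcc).
  destruct (Hgap 0) as [d0 [Hd0 H0]].
  set (g := Rmin d0 1).
  assert (Hg1 : g <= d0) by apply Rmin_l.
  assert (Hg2 : g <= 1) by apply Rmin_r.
  assert (Hg : 0 < g) by (apply Rmin_pos; lra).
  destruct (INR_unbounded (4 / g)) as [N HN].
  assert (HN' : 4 < INR N * g).
  { apply Rmult_lt_compat_r with (r := g) in HN; [|lra].
    unfold Rdiv in HN. rewrite Rmult_assoc, Rinv_l in HN; lra. }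
  destruct (gap_SN Gamma Hgap HG N 1) as [d1 [Hd1 H1]].
  assert (HN0 : 0 <= INR N) by apply pos_INR.
  set (eps := Rmin (g/2) (d1 / (2 * (INR N + 1)))).
  assert (He1 : eps <= g/2) by apply Rmin_l.
  assert (He2 : eps <= d1 / (2 * (INR N + 1))) by apply Rmin_r.
  assert (He : 0 < eps).
  { apply Rmin_pos; [lra|]. apply Rdiv_lt_0_compat; lra. }
  assert (He3 : eps * (INR N + 1) <= d1 / 2).
  { apply Rmult_le_compat_r with (r := INR N + 1) in He2; [|lra].
    replace (d1 / (2 * (INR N + 1)) * (INR N + 1)) with (d1/2) in He2 by (field; lra).
    exact He2. }
  set (Inv := fun w => exists m s, SN Gamma m s /\ s - INR m * eps <= w <= s
                                   /\ INR m * (g/2) <= w).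
  assert (Step : forall w b', Inv w -> Gamma_eps Gamma eps b' /\ 0 <= b' <= 1 -> Inv (w + b')).
  { intros w b' [m [s [Hs [Hw1 Hw2]]]] [[b [Hb Hbb]] Hb'].
    destruct (HG b Hb) as [Hb0 Hb1].
    destruct (Rlt_dec b d0) as [Hlt|Hge].
    - assert (b = 0).
      { destruct (Rle_lt_or_eq_dec 0 b Hb0) as [Hp|Hz]; auto.
        exfalso. apply (H0 b Hb). lra. }
      exists m, s. split; auto. split; lra.
    - exists (S m), (b + s). split.
      + simpl. exists b, s. split; [left; auto|]. split; auto.
      + rewrite S_INR. split; [split|]; nra. }
  assert (Rep : forall n w b', Inv w -> Gamma_eps Gamma eps b' /\ 0 <= b' <= 1 ->
                 Inv (w + INR n * b')).
  { intros n w b' Hw Hb'. induction n as [|n IH].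
    - simpl. replace (w + 0 * b') with w by ring. auto.
    - rewrite S_INR. replace (w + (INR n + 1) * b') with ((w + INR n * b') + b') by ring.
      apply Step; auto. }
  assert (Lst : forall l : list (nat * R),
      (forall p, In p l -> Gamma_eps Gamma eps (snd p) /\ 0 <= snd p <= 1) ->
      Inv (wsum l)).
  { induction l as [|[n b'] l IH]; intro Hl; simpl.
    - exists O, 0. simpl. split; [auto|]. split; lra.
    - replace (INR n * b' + wsum l) with (wsum l + INR n * b') by ring.
      apply Rep.
      + apply IH. intros p Hp. apply Hl. right; auto.
      + apply (Hl (n, b')). left; auto. }
  exists eps, (Rmin (d1/2) 1).
  assert (Hdm1 := Rmin_l (d1/2) 1). assert (Hdm2 := Rmin_r (d1/2) 1).
  split; [lra|]. split; [split; [apply Rmin_pos; lra | auto]|].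
  intros l Hl Hw.
  destruct (Rge_dec (wsum l - 1) (Rmin (d1/2) 1)) as [?|Hlt]; auto.
  exfalso. apply Rnot_ge_lt in Hlt.
  destruct (Lst l Hl) as [m [s [Hs [Hw1 Hw2]]]].
  assert (Hm : INR m < INR N) by nra.
  apply INR_lt in Hm.
  apply (H1 s (SN_mono _ _ _ _ (Nat.lt_le_incl _ _ Hm) Hs)).
  assert (INR m <= INR N) by (apply le_INR; lia).
  assert (0 <= INR m) by apply pos_INR.
  nra.
Qed.
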